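(* Let $n\geq 2$ be an integer, let $c,\varepsilon\in[0,1]$, and let $G$ be a connected graph on $n$ vertices. Assume that $G$ contains no empty bipartite graph with sides of size at least $c\cdot n$, i.e. there are no two disjoint vertex sets $X,Y\subseteq V(G)$ with $|X|,|Y|\geq c\cdot n$ such that no edge of $G$ joins a vertex of $X$ to a vertex of $Y$. Assume moreover that every vertex $x$ of $G$ has closed degree $\overline{d(x)}\leq \varepsilon\cdot n$. Then for every vertex $x$ of $G$ there is an induced path on $k$ vertices in $G$ having $x$ as an endpoint, with $k\geq \frac{1}{2(\varepsilon+c)}$.
   Context: All graphs are finite and simple. The closed degree of a vertex $x$ is $\overline{d(x)}=d(x)+1=|N[x]|$, where $N[x]=\{x\}\cup\{y: xy\in E(G)\}$ is the closed neighborhood. An induced path on $k$ vertices ($P_k$) is a set of $k$ vertices $v_1,\dots,v_k$ such that $v_iv_j$ is an edge if and only if $|i-j|=1$; ''starting in $x$'' means $v_1=x$. *)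

(* Defs.v *)
From HB Require Import structures.
From mathcomp Require Import all_boot all_order all_algebra.
Set Implicit Arguments. Unset Strict Implicit. Unset Printing Implicit Defensive.
Import Order.TTheory GRing.Theory Num.Theory.

Definition simple_graph (T : finType) (e : rel T) : Prop :=
  symmetric e /\ irreflexive e.

Definition connected_graph (T : finType) (e : rel T) : Prop :=
  forall x y : T, connect e x y.

Definition closed_nbhd (T : finType) (e : rel T) (x : T) : {set T} :=
  x |: [set y | e x y].
Definition closed_degree (T : finType) (e : rel T) (x : T) : nat :=
  #|closed_nbhd e x|.

(* p = [v_1; ...; v_k] is an induced path starting in x: v_1 = x, the v_i are
   distinct, and v_i v_j is an edge iff |i - j| = 1.  (The default element x
   of [nth] is irrelevant since only indices < size p are used.) *)
Definition induced_path_from (T : finType) (e : rel T) (x : T) (p : seq T) : Prop :=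
  [/\ head x p = x, 0 < size p, uniq p &
  forall i j : nat, i < size p -> j < size p ->
    e (nth x p i) (nth x p j) = ((i.+1 == j) || (j.+1 == i))].

(* Main.v *)
Require Import Defs.
From HB Require Import structures.
From mathcomp Require Import all_boot all_order all_algebra.
From mathcomp Require Import lra zify.
Import Order.TTheory GRing.Theory Num.Theory.

Set Implicit Arguments. Unset Strict Implicit. Unset Printing Implicit Defensive.

Definition rest (T : finType) (e : rel T) (S : {set T}) : rel T :=
  fun a b => [&& a \in S, b \in S & e a b].
Definition ccomp (T : finType) (e : rel T) (S : {set T}) (z : T) : {set T} :=
  [set y | connect (rest e S) z y].
Definition conn (T : finType) (e : rel T) (C : {set T}) : Prop :=
  forall a b, a \in C -> b \in C -> connect (rest e C) a b.

Lemma rest_sym (T : finType) (e : rel T) (S : {set T}) : symmetric e -> symmetric (rest e S).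
Proof. by move=> se a b; rewrite /rest se andbCA. Qed.

Lemma connect_rest_in (T : finType) (e : rel T) (S : {set T}) (z y : T) :
  z \in S -> connect (rest e S) z y -> y \in S.
Proof.
move=> Hz /connectP [p Hp ->]; elim: p z Hz Hp => [|b p IH] z Hz //=.
by case/andP => /and3P[_ Hb _] Hp; exact: IH Hb Hp.
Qed.

Lemma ccomp_closed (T : finType) (e : rel T) (S : {set T}) (z a b : T) :
  a \in ccomp e S z -> rest e S a b -> b \in ccomp e S z.
Proof. by rewrite !inE => H1 H2; apply: connect_trans H1 (connect1 H2). Qed.

Lemma ccomp_sub (T : finType) (e : rel T) (S : {set T}) (z : T) : z \in S -> ccomp e S z \subset S.
Proof. by move=> Hz; apply/subsetP => y; rewrite inE; apply: connect_rest_in. Qed.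

Lemma ccomp_self (T : finType) (e : rel T) (S : {set T}) (z : T) : z \in ccomp e S z.
Proof. by rewrite inE connect0. Qed.

Lemma ccomp_conn (T : finType) (e : rel T) (S : {set T}) (z : T) : symmetric e -> z \in S ->
  conn e (ccomp e S z).
Proof.
move=> se Hz.
have lift : forall p a, path (rest e S) a p -> a \in ccomp e S z ->
    connect (rest e (ccomp e S z)) a (last a p).
  elim=> [|b p IH] a /=; first by move=> _ _; exact: connect0.
  case/andP=> Hab Hp Ha.
  have Hb := ccomp_closed Ha Hab.
  apply: connect_trans (IH b Hp Hb).
  apply: connect1; rewrite /rest Ha Hb /=; by case/and3P: Hab.
have fromz : forall b, b \in ccomp e S z -> connect (rest e (ccomp e S z)) z b.
  move=> b; rewrite inE => /connectP [p Hp ->]; apply: lift Hp (ccomp_self _ _ _).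
move=> a b Ha Hb; apply: connect_trans (fromz _ Hb).
by rewrite (sym_connect_sym (rest_sym _ se)); apply: fromz.
Qed.

Lemma exit_lemma (T : finType) (r : rel T) (K : {set T}) (p : seq T) (a : T) :
  path r a p -> a \in K -> last a p \notin K ->
  exists b c, [/\ b \in K, c \notin K & r b c].
Proof.
elim: p a => [|b p IH] a /=; first by move=> _ ->.
case/andP=> Hab Hp Ha Hl.
case Hb: (b \in K); first exact: IH Hp Hb Hl.
by exists a, b; rewrite Ha Hb.
Qed.

Lemma adj_lemma (T : finType) (e : rel T) (C : {set T}) (v z : T) : symmetric e ->
  conn e C -> v \in C -> z \in C :\: closed_nbhd e v ->
  exists w, [/\ w \in C, e v w & exists k, k \in ccomp e (C :\: closed_nbhd e v) z /\ e w k].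
Proof.
move=> se HC Hv Hz.
set D := C :\: closed_nbhd e v.
have HzC : z \in C by move: Hz; rewrite inE => /andP[].
have /connectP [p Hp Hl] := HC z v HzC Hv.
have Hvn : v \notin ccomp e D z.
  apply/negP => /(subsetP (ccomp_sub e Hz)); by rewrite inE /closed_nbhd !inE eqxx.
have Hl' : last z p \notin ccomp e D z by rewrite -Hl.
have [b [c [Hb Hc Hbc]]] := exit_lemma Hp (ccomp_self e D z) Hl'.
case/and3P: Hbc => _ HcC ebc.
have HbD : b \in D := subsetP (ccomp_sub e Hz) _ Hb.
have HcD : c \notin D.
  apply/negP => HcD; move: Hc; rewrite (ccomp_closed Hb (_ : rest e D b c)) //.
  by rewrite /rest HbD HcD.
have : c \in closed_nbhd e v by move: HcD; rewrite inE HcC andbT negbK.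
rewrite /closed_nbhd !inE => /orP[/eqP Ecv|evc].
  move: HbD; rewrite inE /closed_nbhd !inE -Ecv se ebc /=; by rewrite orbT.
exists c; split => //; exists b; split => //; by rewrite se.
Qed.

Lemma conn_add (T : finType) (e : rel T) (K : {set T}) (w k : T) :
  symmetric e -> conn e K -> k \in K -> e w k -> conn e (w |: K).
Proof.
move=> se HK Hk ewk.
have lift : forall a b, connect (rest e K) a b -> connect (rest e (w |: K)) a b.
  apply: connect_sub => a b /and3P [Ha Hb eab]; apply: connect1.
  by rewrite /rest !inE Ha Hb eab !orbT.
have fromw : forall b, b \in w |: K -> connect (rest e (w |: K)) w b.
  move=> b; rewrite in_setU1 => /orP [/eqP -> | Hb]; first exact: connect0.
  apply: connect_trans (lift _ _ (HK _ _ Hk Hb)).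
  by apply: connect1; rewrite /rest !inE eqxx Hk ewk orbT.
move=> a b Ha Hb; apply: connect_trans (fromw _ Hb).
by rewrite (sym_connect_sym (rest_sym _ se)); apply: fromw.
Qed.
Local Open Scope ring_scope.

Definition closedD (T : finType) (e : rel T) (D S : {set T}) : bool :=
  (S \subset D) && [forall a in S, forall b in D :\: S, ~~ e a b].

Lemma big_comp (R : realFieldType) (T : finType) (e : rel T) (cn : R) (D : {set T}) :
  symmetric e -> 0 < cn ->
  ~ (exists X Y : {set T}, [disjoint X & Y] /\ cn <= #|X|%:R /\ cn <= #|Y|%:R /\
       (forall x y, x \in X -> y \in Y -> ~~ e x y)) ->
  3 * cn <= #|D|%:R ->
  exists z, z \in D /\ #|D :\: ccomp e D z|%:R < cn.
Proof.
move=> se cn0 Hbip HD.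
have sep : forall S, closedD e D S -> cn <= #|S|%:R -> #|D :\: S|%:R < cn.
  move=> S /andP[_ /forallP HS] HSc; rewrite real_ltNge ?num_real //.
  apply/negP => H; apply: Hbip; exists S, (D :\: S); split.
    rewrite -setI_eq0; apply/eqP/setP => x; rewrite !inE.
    by case: (x \in S); rewrite ?andbF.
  split => //; split => // x y Hx Hy.
  by move: (HS x); rewrite Hx /= => /forallP /(_ y); rewrite Hy.
pose P m := [exists S : {set T}, [&& closedD e D S, cn <= #|S|%:R & #|S| == m]].
have exP : exists m, P m.
  exists #|D|; apply/existsP; exists D; rewrite eqxx andbT.
  rewrite /closedD subxx /=; apply/andP; split; last by lra.
  by apply/forallP => a; apply/implyP => _; apply/forallP => b; rewrite setDv inE.
case: (ex_minnP exP) => m /existsP [S /and3P [HSc HScn /eqP HSm]] Hmin.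
have minS : forall S', closedD e D S' -> cn <= #|S'|%:R -> (#|S| <= #|S'|)%N.
  move=> S' H1 H2; rewrite HSm; apply: Hmin; apply/existsP; exists S'.
  by rewrite H1 H2 eqxx.
have HDS := sep S HSc HScn.
case/andP: (HSc) => sSD /forallP HS.
have [z Hz] : exists z, z \in S.
  apply/set0Pn; apply/negP => /eqP S0; move: HScn; rewrite S0 cards0; lra.
have HzD : z \in D := subsetP sSD _ Hz.
set K := ccomp e D z.
have sKD : K \subset D := ccomp_sub e HzD.
have KclosedD : closedD e D K.
  rewrite /closedD sKD /=; apply/forallP => a; apply/implyP => Ha.
  apply/forallP => b; apply/implyP; rewrite inE => /andP [HbK HbD].
  have HaD := subsetP sKD _ Ha.
  apply/negP => eab; move/negP: HbK; apply; apply: ccomp_closed Ha _.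
  by rewrite /rest HaD HbD.
have sKS : K \subset S.
  have stay : forall p a, a \in S -> path (rest e D) a p -> last a p \in S.
    elim=> [|b p IH] a Ha //=.
    case/andP => /and3P [_ HbD eab] Hp; apply: IH Hp.
  case HbS: (b \in S) => //; move: (HS a); rewrite Ha /= => /forallP /(_ b).
  by rewrite inE HbS HbD eab.
  apply/subsetP => y; rewrite inE => /connectP [p Hp ->]; exact: stay Hz Hp.
exists z; split => //.
case: (boolP (cn <= #|K|%:R)) => HKc.
  have eKS : K = S by apply/eqP; rewrite eqEcard sKS /=; exact: minS K KclosedD HKc.
  by rewrite -/K eKS.
exfalso.
have SKc : closedD e D (S :\: K).
  rewrite /closedD (subset_trans (subsetDl _ _) sSD) /=.
  apply/forallP => a; apply/implyP; rewrite in_setD => /andP [HaK HaS].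
  apply/forallP => b; apply/implyP; rewrite !in_setD negb_and negbK => /andP [Hb HbD].
  case/orP: Hb => Hb.
    move: (KclosedD); case/andP => _ /forallP /(_ b); rewrite Hb /= => /forallP /(_ a).
    by rewrite in_setD HaK (subsetP sSD _ HaS) se.
  by move: (HS a); rewrite HaS /= => /forallP /(_ b); rewrite in_setD Hb HbD.
have HSK : ~~ (cn <= #|S :\: K|%:R).
  apply/negP => H; have := minS _ SKc H.
  rewrite leqNgt => /negP; apply.
  rewrite (cardsD1 z S) Hz add1n ltnS; apply: subset_leq_card.
  apply/subsetP => y; rewrite in_setD => /andP [HyK HyS]; rewrite !inE HyS andbT.
  by apply/negP => /eqP Eyz; move: HyK; rewrite Eyz /K ccomp_self.
have cardD : #|D| = (#|K| + #|S :\: K| + #|D :\: S|)%N.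
  rewrite -(cardsID S D) (setIidPr sSD) -(cardsID K S) (setIidPr sKS) //.
move: HD HKc HSK HDS; rewrite cardD !natrD -!real_ltNge ?num_real //; lra.
Qed.
Local Close Scope ring_scope.

Lemma ipath_rcons (T : finType) (e : rel T) (x : T) (p : seq T) (w : T) :
  symmetric e -> irreflexive e -> induced_path_from e x p -> w \notin p ->
  e (last x p) w -> (forall u, u \in p -> u != last x p -> ~~ e u w) ->
  induced_path_from e x (rcons p w).
Proof.
move=> se ie [Hh Hs Hu He] Hw Hl Hn.
have key : forall i, i < size p -> e (nth x p i) w = (i.+1 == size p).
  move=> i Hi; case: (eqVneq i.+1 (size p)) => Ei.
    have -> : i = (size p).-1 by rewrite -Ei.
    by rewrite nth_last Hl.
  apply/negbTE/Hn; first exact: mem_nth.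
  rewrite -nth_last nth_uniq //; last by rewrite prednK.
  apply/eqP; lia.
split.
- by case: p Hh Hs {He Hw Hl Hn key Hu}.
- by rewrite size_rcons.
- by rewrite rcons_uniq Hw Hu.
move=> i j; rewrite size_rcons !ltnS => Hi Hj; rewrite !nth_rcons.
case: (ltnP i (size p)) => Hi'; case: (ltnP j (size p)) => Hj'.
- exact: He.
- have Ej : j = size p by lia.
  rewrite Ej eqxx key //; have -> : ((size p).+1 == i) = false by apply/eqP; lia.
  by rewrite ?orbF.
- have Ei : i = size p by lia.
  rewrite Ei eqxx se key //; have -> : ((size p).+1 == j) = false by apply/eqP; lia.
  by [].
- have Ei : i = size p by lia. have Ej : j = size p by lia.
  rewrite Ei Ej eqxx ie; symmetry; apply/negbTE; apply/negP; case/orP => /eqP; lia.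
Qed.
Local Open Scope ring_scope.

Lemma main_ind (R : realFieldType) (n : nat) (c eps : R) (T : finType) (e : rel T) (x : T) :
  symmetric e -> irreflexive e -> 0 < c * n%:R ->
  ~ (exists X Y : {set T}, [disjoint X & Y] /\
       c * n%:R <= #|X|%:R /\ c * n%:R <= #|Y|%:R /\
       (forall x y, x \in X -> y \in Y -> ~~ e x y)) ->
  (forall v : T, (closed_degree e v)%:R <= eps * n%:R) ->
  forall N (p : seq T) (C : {set T}), (#|C| <= N)%N ->
   induced_path_from e x p -> last x p \in C -> conn e C ->
   (forall a u, a \in C -> a != last x p -> u \in p -> u != last x p ->
      (a != u) && ~~ e u a) ->
   n%:R <= ((size p)%:R - 1) * (eps + c) * n%:R + #|C|%:R ->
   exists q, induced_path_from e x q /\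
     n%:R <= (size q)%:R * (eps + c) * n%:R + 2 * c * n%:R.
Proof.
move=> se ie cn0 Hbip Hdeg N; elim: N => [|N IH] p C HN Hp Hv HC HI Hsz.
  by move: HN; rewrite leqn0 => /eqP /card0_eq /(_ (last x p)); rewrite Hv.
case: (boolP (#|C|%:R < (eps + 3 * c) * n%:R)) => Hsmall.
  by exists p; split => //; lra.
set v := last x p in Hv HI Hsz.
set D := C :\: closed_nbhd e v.
have HD : (#|C| <= #|D| + closed_degree e v)%N.
  rewrite -(cardsID (closed_nbhd e v) C) addnC leq_add2l.
  exact/subset_leq_card/subsetIr.
have HD' : 3 * (c * n%:R) <= #|D|%:R.
  move: Hsmall (Hdeg v); rewrite -real_leNgt ?num_real // => H1 H2.
  have := HD; rewrite -(ler_nat R) natrD => H3; lra.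
have [z [HzD HDK]] := big_comp se cn0 Hbip HD'.
have [w [HwC evw [k [HkK ewk]]]] := adj_lemma se HC Hv HzD.
set K := ccomp e D z in HDK HkK.
have sKD : K \subset D := ccomp_sub e HzD.
have sDC : D \subset C := subsetDl _ _.
have wv : w != v by apply/eqP => Ewv; move: evw; rewrite Ewv ie.
have wK : w \notin K.
  apply/negP => /(subsetP sKD); rewrite in_setD /closed_nbhd !inE evw orbT.
  by [].
have KD : forall a, a \in K -> (a != v) && ~~ e v a.
  move=> a /(subsetP sKD); rewrite in_setD /closed_nbhd !inE negb_or.
  by case/andP.
have wp : w \notin p.
  apply/negP => Hwp; have := HI w w HwC wv Hwp wv; by rewrite eqxx.
apply: (IH (rcons p w) (w |: K)).
- rewrite -ltnS; apply: leq_trans HN; rewrite (cardsD1 v C) Hv add1n ltnS.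
  apply/subset_leq_card/subsetP => y; rewrite in_setU1 => /orP [/eqP -> | Hy].
    by rewrite !inE wv HwC.
  by rewrite !inE (subsetP sDC _ (subsetP sKD _ Hy)) andbT; case/andP: (KD _ Hy).
- apply: ipath_rcons => //.
  move=> u Hu Huv; by case/andP: (HI w u HwC wv Hu Huv).
- by rewrite last_rcons in_setU1 eqxx.
- exact: conn_add se (ccomp_conn se HzD) HkK ewk.
- rewrite last_rcons => a u; rewrite in_setU1 => /orP [/eqP -> | Ha]; first by rewrite eqxx.
  move=> _; rewrite mem_rcons in_cons => /orP [/eqP -> | Hu]; first by rewrite eqxx.
  move=> _; case: (eqVneq u v) => [-> | Huv]; first exact: KD.
  apply: HI Hu Huv; first exact: subsetP sDC _ (subsetP sKD _ Ha).
  by case/andP: (KD _ Ha).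
- rewrite size_rcons cardsU1 wK -addn1 add1n !natrD.
  have HKD : (#|D| = #|K| + #|D :\: K|)%N.
    by rewrite -(cardsID K D) (setIidPr sKD).
  move: HD (Hdeg v); rewrite -(ler_nat R) HKD !natrD => H1 H2.
  move: Hsz; lra.
Qed.
Unset Implicit Arguments. Set Strict Implicit.

Local Open Scope ring_scope.

Theorem theorem3 (R : realFieldType) (n : nat) (c eps : R)
  (T : finType) (e : rel T) :
  (2 <= n)%N ->
  0 <= c <= 1 -> 0 <= eps <= 1 ->
  simple_graph e -> #|T| = n -> connected_graph e ->
  (* no empty bipartite graph with both sides of size >= c n *)
  ~ (exists X Y : {set T}, [disjoint X & Y] /\
       c * n%:R <= #|X|%:R /\ c * n%:R <= #|Y|%:R /\
       (forall x y, x \in X -> y \in Y -> ~~ e x y)) ->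
  (forall x : T, (closed_degree e x)%:R <= eps * n%:R) ->
  forall x : T, exists p : seq T,
    induced_path_from e x p /\ 1 / (2 * (eps + c)) <= (size p)%:R.
Proof.
move=> Hn /andP [c0 c1] /andP [e0 e1] [se ie] HT Hcon Hbip Hdeg x.
have npos : 0 < n%:R :> R by rewrite ltr0n; lia.
have cn0 : 0 < c * n%:R.
  rewrite real_ltNge ?num_real //; apply/negP => H; apply: Hbip.
  exists set0, set0; split; first by rewrite -setI_eq0 setI0.
  by rewrite cards0; split => //; split => // a b; rewrite inE.
have cpos : 0 < c by move: cn0; rewrite pmulr_lgt0.
have ecpos : 0 < 2 * (eps + c) by lra.
case: (boolP (c <= 1/4)) => Hc.
  have H := @main_ind R n c eps T e x se ie cn0 Hbip Hdeg #|T| [:: x] [set: T] (max_card _).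
  have h1 : induced_path_from e x [:: x].
    split => //.
    by case=> [|[|i]] [|[|j]] //=; rewrite ie.
  have h2 : last x [:: x] \in [set: T] by rewrite inE.
  have h3 : conn e [set: T].
    move=> a b _ _; rewrite (eq_connect (e' := e)) ?Hcon // => u v.
    by rewrite /rest !inE.
  have h4 : forall a u, a \in [set: T] -> a != last x [:: x] -> u \in [:: x] ->
      u != last x [:: x] -> (a != u) && ~~ e u a.
    by move=> a u _ Ha; rewrite inE => /eqP ->; rewrite /= eqxx.
  have h5 : n%:R <= ((size [:: x])%:R - 1) * (eps + c) * n%:R + #|[set: T]|%:R.
    rewrite cardsT HT /=; lra.
  have [q [Hq Hqs]] := H h1 h2 h3 h4 h5.
  exists q; split => //.
  have H1 : 1 <= (size q)%:R * (eps + c) + 2 * c.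
    rewrite -(ler_pM2r npos); lra.
  rewrite ler_pdivrMr //; lra.
have [y0 Hy0] : exists y0, y0 != x.
  case: (pickP (predC1 x)) => [y0 Hy0 | H]; first by exists y0.
  have := cardC1 x; rewrite (eq_card0 H) HT; lia.
have [y exy] : exists y, e x y.
  move: (Hcon x y0) => /connectP [[|y p] Hp Ey]; first by move: Hy0; rewrite Ey eqxx.
  by exists y; case/andP: Hp.
exists [:: x; y]; split.
  split => //=.
    rewrite inE andbT; apply/negP => /eqP Exy; move: exy; by rewrite Exy ie.
  by case=> [|[|i]] [|[|j]] //=; rewrite ?ie ?exy // se exy.
move: Hc; rewrite -real_ltNge ?num_real // => Hc; rewrite ler_pdivrMr //=; lra.
Qed.
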